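(* Let $$\begin{array}{ccc}\mathcal A&\xrightarrow{F}&\mathcal B\\ {\scriptstyle H}\downarrow&&\downarrow{\scriptstyle K}\\ \mathcal C&\xrightarrow{G}&\mathcal D\end{array}$$ be a commuting square of (possibly large) $\mathcal V$-categories and $\mathcal V$-functors, with $G$ fully faithful and $H,K$ discrete isofibrations. Then the square is a pullback in $\mathcal V\text{-}\mathbf{CAT}$ if and only if: (1) $F$ is fully faithful; and (2) an object $b\in\mathcal B$ is in the essential image of $F$ if and only if $Kb$ is in the essential image of $G$.
   Context: $\mathcal V$ is a symmetric monoidal closed category and $\mathcal V\text{-}\mathbf{CAT}$ is the (ordinary) category of $\mathcal V$-categories and $\mathcal V$-functors; pullback means strict pullback there. A $\mathcal V$-functor $U\colon\mathcal D\to\mathcal C$ is a discrete isofibration if for each object $d\in\mathcal D$ and each isomorphism $f\colon c\cong Ud$ in $\mathcal C$ there is a unique isomorphism $f'\colon c'\cong d$ in $\mathcal D$ with $Uf'=f$. *)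

(* Defs.v *)
(* Ordinary categories (hom-types with Leibniz equality of morphisms) *)
Record Cat : Type := {
  ob :> Type;
  hom : ob -> ob -> Type;
  idm : forall a, hom a a;
  cmp : forall a b c, hom b c -> hom a b -> hom a c;
  cmp_idl : forall a b (f : hom a b), cmp a b b (idm b) f = f;
  cmp_idr : forall a b (f : hom a b), cmp a a b f (idm a) = f;
  cmp_assoc : forall a b c d (h : hom c d) (g : hom b c) (f : hom a b),
    cmp a c d h (cmp a b c g f) = cmp a b d (cmp b c d h g) f
}.
Arguments hom {_} a b.
Arguments idm {_} a.
Arguments cmp {_ a b c} g f.
Arguments cmp_idl {_ a b} f.
Arguments cmp_idr {_ a b} f.
Arguments cmp_assoc {_ a b c d} h g f.

Notation "g ⊙ f" := (cmp g f) (at level 40, left associativity).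

Definition is_iso {C : Cat} {a b : C} (f : hom a b) : Prop :=
  exists g : hom b a, g ⊙ f = idm a /\ f ⊙ g = idm b.

Record SMCData (C : Cat) := {
  ten : C -> C -> C;
  tenm : forall a a' b b', hom a a' -> hom b b' -> hom (ten a b) (ten a' b');
  uI : C;
  asc : forall a b c, hom (ten (ten a b) c) (ten a (ten b c));
  asc_inv : forall a b c, hom (ten a (ten b c)) (ten (ten a b) c);
  lu : forall a, hom (ten uI a) a;
  lu_inv : forall a, hom a (ten uI a);
  ru : forall a, hom (ten a uI) a;
  ru_inv : forall a, hom a (ten a uI);
  sym : forall a b, hom (ten a b) (ten b a);
  ihom : C -> C -> C;
  ev : forall b c, hom (ten (ihom b c) b) c
}.
Arguments ten {C} _ a b.
Arguments tenm {C} _ {a a' b b'} f g.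
Arguments uI {C} _.
Arguments asc {C} _ a b c.
Arguments asc_inv {C} _ a b c.
Arguments lu {C} _ a.
Arguments lu_inv {C} _ a.
Arguments ru {C} _ a.
Arguments ru_inv {C} _ a.
Arguments sym {C} _ a b.
Arguments ihom {C} _ b c.
Arguments ev {C} _ b c.

Record SMCLaws (C : Cat) (M : SMCData C) : Prop := {
  tenm_id : forall a b, tenm M (idm a) (idm b) = idm (ten M a b);
  tenm_cmp : forall a a' a'' b b' b'' (f : hom a a') (f' : hom a' a'')
      (g : hom b b') (g' : hom b' b''),
    tenm M (f' ⊙ f) (g' ⊙ g) = tenm M f' g' ⊙ tenm M f g;
  asc_iso1 : forall a b c, asc_inv M a b c ⊙ asc M a b c = idm _;
  asc_iso2 : forall a b c, asc M a b c ⊙ asc_inv M a b c = idm _;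
  asc_nat : forall a a' b b' c c' (f : hom a a') (g : hom b b') (h : hom c c'),
    asc M a' b' c' ⊙ tenm M (tenm M f g) h = tenm M f (tenm M g h) ⊙ asc M a b c;
  lu_iso1 : forall a, lu_inv M a ⊙ lu M a = idm _;
  lu_iso2 : forall a, lu M a ⊙ lu_inv M a = idm _;
  lu_nat : forall a a' (f : hom a a'),
    lu M a' ⊙ tenm M (idm (uI M)) f = f ⊙ lu M a;
  ru_iso1 : forall a, ru_inv M a ⊙ ru M a = idm _;
  ru_iso2 : forall a, ru M a ⊙ ru_inv M a = idm _;
  ru_nat : forall a a' (f : hom a a'),
    ru M a' ⊙ tenm M f (idm (uI M)) = f ⊙ ru M a;
  pentagon : forall a b c d,
    asc M a b (ten M c d) ⊙ asc M (ten M a b) c d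
    = tenm M (idm a) (asc M b c d) ⊙
        (asc M a (ten M b c) d ⊙ tenm M (asc M a b c) (idm d));
  triangle : forall a b,
    tenm M (idm a) (lu M b) ⊙ asc M a (uI M) b = tenm M (ru M a) (idm b);
  sym_nat : forall a a' b b' (f : hom a a') (g : hom b b'),
    sym M a' b' ⊙ tenm M f g = tenm M g f ⊙ sym M a b;
  sym_invol : forall a b, sym M b a ⊙ sym M a b = idm (ten M a b);
  hexagon : forall a b c,
    asc M b c a ⊙ (sym M a (ten M b c) ⊙ asc M a b c)
    = tenm M (idm b) (sym M a c) ⊙ (asc M b a c ⊙ tenm M (sym M a b) (idm c));
  (* closedness: (- ⊗ b) has right adjoint [b, -] with counit ev *)
  closed : forall a b c (f : hom (ten M a b) c),
    exists! g : hom a (ihom M b c), ev M b c ⊙ tenm M g (idm b) = f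
}.
Arguments tenm_cmp {C M} _ {a a' a'' b b' b''} f f' g g'.

Record SMCC := { Vc : Cat; Vm : SMCData Vc; Vl : SMCLaws Vc Vm }.

Record VCat (V : SMCC) := {
  vobj :> Type;
  vhom : vobj -> vobj -> ob (Vc V);
  vcomp : forall x y z, hom (ten (Vm V) (vhom y z) (vhom x y)) (vhom x z);
  vunit : forall x, hom (uI (Vm V)) (vhom x x);
  vassoc : forall x y z w,
    vcomp x y w ⊙ tenm (Vm V) (vcomp y z w) (idm (vhom x y))
    = vcomp x z w ⊙ (tenm (Vm V) (idm (vhom z w)) (vcomp x y z)
                      ⊙ asc (Vm V) (vhom z w) (vhom y z) (vhom x y));
  vunit_l : forall x y,
    vcomp x y y ⊙ tenm (Vm V) (vunit y) (idm (vhom x y)) = lu (Vm V) (vhom x y);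
  vunit_r : forall x y,
    vcomp x x y ⊙ tenm (Vm V) (idm (vhom x y)) (vunit x) = ru (Vm V) (vhom x y)
}.
Arguments vobj {V} _.
Arguments vhom {V} _ x y.
Arguments vcomp {V} _ x y z.
Arguments vunit {V} _ x.

Record VFunctor (V : SMCC) (A B : VCat V) := {
  fobj :> A -> B;
  fhom : forall x y, hom (vhom A x y) (vhom B (fobj x) (fobj y));
  fcomp : forall x y z,
    fhom x z ⊙ vcomp A x y z
    = vcomp B (fobj x) (fobj y) (fobj z) ⊙ tenm (Vm V) (fhom y z) (fhom x y);
  funit : forall x, fhom x x ⊙ vunit A x = vunit B (fobj x)
}.
Arguments VFunctor {V} A B.
Arguments fobj {V A B} _ _.
Arguments fhom {V A B} _ x y.
Arguments fcomp {V A B} _ x y z.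
Arguments funit {V A B} _ x.

Lemma vfcomp_comp {V : SMCC} {A B C : VCat V} (G : VFunctor B C) (F : VFunctor A B)
  (x y z : A) :
  (fhom G (F x) (F z) ⊙ fhom F x z) ⊙ vcomp A x y z
  = vcomp C (G (F x)) (G (F y)) (G (F z))
      ⊙ tenm (Vm V) (fhom G (F y) (F z) ⊙ fhom F y z) (fhom G (F x) (F y) ⊙ fhom F x y).
Proof.
  rewrite <- cmp_assoc, (fcomp F), cmp_assoc, (fcomp G), <- cmp_assoc.
  rewrite (tenm_cmp (Vl V)). reflexivity.
Qed.

Lemma vfcomp_unit {V : SMCC} {A B C : VCat V} (G : VFunctor B C) (F : VFunctor A B)
  (x : A) :
  (fhom G (F x) (F x) ⊙ fhom F x x) ⊙ vunit A x = vunit C (G (F x)).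
Proof.
  rewrite <- cmp_assoc, (funit F), (funit G). reflexivity.
Qed.

Definition vfcomp {V : SMCC} {A B C : VCat V} (G : VFunctor B C) (F : VFunctor A B)
  : VFunctor A C :=
  {| fobj := fun x => G (F x);
     fhom := fun x y => fhom G (F x) (F y) ⊙ fhom F x y;
     fcomp := vfcomp_comp G F;
     funit := vfcomp_unit G F |}.

Definition uhom {V : SMCC} (A : VCat V) (x y : A) : Type :=
  hom (uI (Vm V)) (vhom A x y).

Definition ucomp {V : SMCC} {A : VCat V} {x y z : A}
  (g : uhom A y z) (f : uhom A x y) : uhom A x z :=
  vcomp A x y z ⊙ (tenm (Vm V) g f ⊙ lu_inv (Vm V) (uI (Vm V))).

Definition uid {V : SMCC} (A : VCat V) (x : A) : uhom A x x := vunit A x.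

Definition is_uiso {V : SMCC} {A : VCat V} {x y : A} (f : uhom A x y) : Prop :=
  exists g : uhom A y x, ucomp g f = uid A x /\ ucomp f g = uid A y.

Definition ufmap {V : SMCC} {A B : VCat V} (F : VFunctor A B) {x y : A}
  (f : uhom A x y) : uhom B (F x) (F y) := fhom F x y ⊙ f.

Definition fully_faithful {V : SMCC} {A B : VCat V} (F : VFunctor A B) : Prop :=
  forall x y : A, is_iso (fhom F x y).

Definition ess_image {V : SMCC} {A B : VCat V} (F : VFunctor A B) (b : B) : Prop :=
  exists (a : A) (f : uhom B (F a) b), is_uiso f.

(* discrete isofibration U : D -> C: for every d and iso f : c ≅ U d there is a
   unique iso f' : c' ≅ d with U f' = f (equality of the pairs (U c', U f')
   and (c, f) as dependent pairs). *)
Definition discrete_isofibration {V : SMCC} {D C : VCat V} (U : VFunctor D C) : Prop :=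
  forall (d : D) (c : C) (f : uhom C c (U d)), is_uiso f ->
    exists (c' : D) (f' : uhom D c' d),
      is_uiso f' /\
      existT (fun c0 : C => uhom C c0 (U d)) (U c') (ufmap U f') =
      existT (fun c0 : C => uhom C c0 (U d)) c f /\
      forall (c'' : D) (f'' : uhom D c'' d),
        is_uiso f'' ->
        existT (fun c0 : C => uhom C c0 (U d)) (U c'') (ufmap U f'') =
        existT (fun c0 : C => uhom C c0 (U d)) c f ->
        existT (fun d0 : D => uhom D d0 d) c' f' =
        existT (fun d0 : D => uhom D d0 d) c'' f''.

(* strict pullback in V-CAT of the (commuting) square
       A --F--> B
       H|       |K
       C --G--> D                                                       *)
Definition is_pullback {V : SMCC} {A B C D : VCat V}
  (F : VFunctor A B) (H : VFunctor A C) (K : VFunctor B D) (G : VFunctor C D) : Prop :=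
  forall (X : VCat V) (P : VFunctor X B) (Q : VFunctor X C),
    vfcomp K P = vfcomp G Q ->
    exists! U : VFunctor X A, vfcomp F U = P /\ vfcomp H U = Q.

(* Main.v *)
Require Import Defs.
From Stdlib Require Import ProofIrrelevance FunctionalExtensionality Eqdep IndefiniteDescription.

Definition VS {V : SMCC} (A : VCat V) (S : ob (Vc V)) : Type :=
  sigT (fun p : vobj A * vobj A => hom S (vhom A (fst p) (snd p))).
Definition mk {V : SMCC} {A : VCat V} {S : ob (Vc V)} (x y : A)
  (m : hom S (vhom A x y)) : VS A S :=
  existT (fun p : vobj A * vobj A => hom S (vhom A (fst p) (snd p))) (x, y) m.

Lemma mk_fst {V : SMCC} {A : VCat V} {S} (x y x' y' : A) (u : hom S (vhom A x y))
  (v : hom S (vhom A x' y')) : mk x y u = mk x' y' v -> x = x' /\ y = y'.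
Proof. intro E. apply (f_equal (@projT1 _ _)) in E. simpl in E. inversion E. auto. Qed.

Lemma mk_inj {V : SMCC} {A : VCat V} {S} (x y : A) (u v : hom S (vhom A x y)) :
  mk x y u = mk x y v -> u = v.
Proof. intro E. exact (Eqdep.EqdepTheory.inj_pair2 _ _ _ _ _ E). Qed.

Definition vcast {V : SMCC} {A : VCat V} {x y x' y' : A} (e1 : x = x') (e2 : y = y')
  : hom (vhom A x y) (vhom A x' y') :=
  match e1 in _ = x1, e2 in _ = y1 return hom (vhom A x y) (vhom A x1 y1) with
  | eq_refl, eq_refl => idm _ end.

Lemma mk_cast {V : SMCC} {A : VCat V} {S} (x y x' y' : A) (e1 : x = x') (e2 : y = y')
  (m : hom S (vhom A x y)) : mk x' y' (vcast e1 e2 ⊙ m) = mk x y m.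
Proof. destruct e1, e2. simpl. rewrite cmp_idl. reflexivity. Qed.

Lemma vcast_comp {V : SMCC} {A : VCat V} (x y z x' y' z' : A) (e1 : x = x') (e2 : y = y')
  (e3 : z = z') :
  vcast e1 e3 ⊙ vcomp A x y z = vcomp A x' y' z' ⊙ tenm (Vm V) (vcast e2 e3) (vcast e1 e2).
Proof. destruct e1, e2, e3. simpl. rewrite (tenm_id _ _ (Vl V)), cmp_idl, cmp_idr. reflexivity. Qed.

Lemma vcast_unit {V : SMCC} {A : VCat V} (x x' : A) (e : x = x') :
  vcast e e ⊙ vunit A x = vunit A x'.
Proof. destruct e. simpl. apply cmp_idl. Qed.

Definition mapV {V : SMCC} {A B : VCat V} {S} (M : VFunctor A B) (s : VS A S) : VS B S :=
  match s with existT _ p m => mk (M (fst p)) (M (snd p)) (fhom M (fst p) (snd p) ⊙ m) end.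

Lemma mapV_mk {V : SMCC} {A B : VCat V} {S} (M : VFunctor A B) (x y : A) (m : hom S (vhom A x y)) :
  mapV M (mk x y m) = mk (M x) (M y) (fhom M x y ⊙ m).
Proof. reflexivity. Qed.

Lemma mapV_comp {V : SMCC} {A B C : VCat V} {S} (K : VFunctor B C) (F : VFunctor A B) (s : VS A S) :
  mapV (vfcomp K F) s = mapV K (mapV F s).
Proof. destruct s as [[x y] m]. simpl. unfold mk. rewrite cmp_assoc. reflexivity. Qed.

Lemma functor_ext {V : SMCC} {A B : VCat V} (M N : VFunctor A B) :
  (forall x, M x = N x) ->
  (forall x y, mk (M x) (M y) (fhom M x y) = mk (N x) (N y) (fhom N x y)) -> M = N.
Proof.
  destruct M as [Mo Mh Mc Mu], N as [No Nh Nc Nu]; simpl; intros Ho Hh.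
  assert (Mo = No) by (apply functional_extensionality; auto). subst No.
  assert (Mh = Nh).
  { apply functional_extensionality_dep; intro x; apply functional_extensionality_dep; intro y.
    apply mk_inj. apply Hh. }
  subst Nh. f_equal; apply proof_irrelevance.
Qed.

Lemma functor_eq_mk {V : SMCC} {A B : VCat V} (M N : VFunctor A B) (E : M = N) (x y : A) :
  mk (M x) (M y) (fhom M x y) = mk (N x) (N y) (fhom N x y).
Proof. subst. reflexivity. Qed.

Lemma mk_post {V : SMCC} {A : VCat V} {S S'} (a b c d : A) (u : hom S (vhom A a b))
  (v : hom S (vhom A c d)) (m : hom S' S) :
  mk a b u = mk c d v -> mk a b (u ⊙ m) = mk c d (v ⊙ m).
Proof. intro E. exact (f_equal (fun s : VS A S => existT _ (projT1 s) (projT2 s ⊙ m)) E). Qed.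

Lemma iso_mono {W : Cat} {a b : W} (f : hom a b) : is_iso f ->
  forall c (u v : hom c a), f ⊙ u = f ⊙ v -> u = v.
Proof.
  intros [g [H1 H2]] c u v E.
  rewrite <- (cmp_idl u), <- (cmp_idl v), <- H1, <- !cmp_assoc, E. reflexivity.
Qed.

Lemma ff_mk_inj {V : SMCC} {A B : VCat V} (M : VFunctor A B) (Hff : fully_faithful M) {S}
  (a b a' b' : A) (m1 : hom S (vhom A a b)) (m2 : hom S (vhom A a' b')) :
  a = a' -> b = b' ->
  mk (M a) (M b) (fhom M a b ⊙ m1) = mk (M a') (M b') (fhom M a' b' ⊙ m2) ->
  mk a b m1 = mk a' b' m2.
Proof.
  intros <- <- E. apply mk_inj in E. apply (iso_mono _ (Hff a b)) in E. subst. reflexivity.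
Qed.

Lemma ff_full {V : SMCC} {A B : VCat V} (M : VFunctor A B) (Hff : fully_faithful M) {S}
  (a b : A) (g : hom S (vhom B (M a) (M b))) : exists m, fhom M a b ⊙ m = g.
Proof.
  destruct (Hff a b) as [h [H1 H2]]. exists (h ⊙ g). rewrite cmp_assoc, H2, cmp_idl. reflexivity.
Qed.

Definition finv {V : SMCC} {A B : VCat V} (M : VFunctor A B) (Hff : fully_faithful M) (x y : A)
  : hom (vhom B (M x) (M y)) (vhom A x y) :=
  proj1_sig (constructive_indefinite_description _ (Hff x y)).

Lemma finv_cancel {V : SMCC} {A B : VCat V} (M : VFunctor A B) (Hff : fully_faithful M) (x y : A)
  {S} (m : hom S (vhom B (M x) (M y))) : fhom M x y ⊙ (finv M Hff x y ⊙ m) = m.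
Proof.
  unfold finv. destruct (constructive_indefinite_description _ (Hff x y)) as [g [H1 H2]]. simpl.
  rewrite cmp_assoc, H2, cmp_idl. reflexivity.
Qed.

Lemma ufmap_ucomp {V : SMCC} {A B : VCat V} (M : VFunctor A B) (x y z : A)
  (g : uhom A y z) (f : uhom A x y) :
  ufmap M (ucomp g f) = ucomp (ufmap M g) (ufmap M f).
Proof.
  unfold ufmap, ucomp. rewrite (tenm_cmp (Vl V)). rewrite !cmp_assoc. rewrite (fcomp M). reflexivity.
Qed.

Lemma ufmap_uid {V : SMCC} {A B : VCat V} (M : VFunctor A B) (x : A) :
  ufmap M (uid A x) = uid B (M x).
Proof. apply funit. Qed.

Lemma ucomp_uid {V : SMCC} {A : VCat V} (x : A) : ucomp (uid A x) (uid A x) = uid A x.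
Proof.
  unfold ucomp, uid.
  assert (Eq : tenm (Vm V) (vunit A x) (vunit A x)
     = tenm (Vm V) (vunit A x) (idm _) ⊙ tenm (Vm V) (idm _) (vunit A x)).
  { rewrite <- (tenm_cmp (Vl V)). rewrite cmp_idr, cmp_idl. reflexivity. }
  rewrite Eq. rewrite !cmp_assoc. rewrite (vunit_l _ A). rewrite (lu_nat _ _ (Vl V)).
  rewrite <- cmp_assoc. rewrite (lu_iso2 _ _ (Vl V)). apply cmp_idr.
Qed.

Lemma uid_iso {V : SMCC} (A : VCat V) (x : A) : is_uiso (uid A x).
Proof. exists (uid A x). rewrite ucomp_uid. auto. Qed.

Lemma ufmap_iso {V : SMCC} {A B : VCat V} (M : VFunctor A B) (x y : A) (f : uhom A x y) :
  is_uiso f -> is_uiso (ufmap M f).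
Proof.
  intros [g [H1 H2]]. exists (ufmap M g). rewrite <- !ufmap_ucomp, H1, H2, !ufmap_uid. auto.
Qed.

Lemma ff_reflect_iso {V : SMCC} {A B : VCat V} (M : VFunctor A B) (Hff : fully_faithful M)
  (x y : A) (f : uhom A x y) : is_uiso (ufmap M f) -> is_uiso f.
Proof.
  intros [g [H1 H2]]. destruct (ff_full M Hff y x g) as [g' Hg'].
  exists g'. split.
  - apply (iso_mono _ (Hff x x)). fold (ufmap M (ucomp g' f)). fold (ufmap M (uid A x)).
    rewrite ufmap_ucomp, ufmap_uid. unfold ufmap at 1. rewrite Hg'. exact H1.
  - apply (iso_mono _ (Hff y y)). fold (ufmap M (ucomp f g')). fold (ufmap M (uid A y)).
    rewrite ufmap_ucomp, ufmap_uid. unfold ufmap at 2. rewrite Hg'. exact H2.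
Qed.

Lemma uiso_inv {V : SMCC} {A : VCat V} (x y : A) (f : uhom A x y) :
  is_uiso f -> exists g : uhom A y x, is_uiso g.
Proof. intros [g [H1 H2]]. exists g. exists f. auto. Qed.

Lemma uiso_cast {V : SMCC} {A : VCat V} (x y x' y' : A) (e1 : x = x') (e2 : y = y')
  (f : uhom A x y) : is_uiso f -> is_uiso (vcast e1 e2 ⊙ f).
Proof. destruct e1, e2. simpl. unfold uhom in f. rewrite cmp_idl. auto. Qed.

Lemma fix_to_mk {V : SMCC} {A : VCat V} (z x y : A) (f : uhom A x z) (g : uhom A y z) :
  existT (fun c0 : A => uhom A c0 z) x f = existT (fun c0 : A => uhom A c0 z) y g ->
  mk x z f = mk y z g.
Proof.
  intro E. assert (x = y) as <- by exact (f_equal (@projT1 _ _) E).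
  apply Eqdep.EqdepTheory.inj_pair2 in E. subst. reflexivity.
Qed.

Lemma mk_to_fix {V : SMCC} {A : VCat V} (z x y : A) (f : uhom A x z) (g : uhom A y z) :
  mk x z f = mk y z g ->
  existT (fun c0 : A => uhom A c0 z) x f = existT (fun c0 : A => uhom A c0 z) y g.
Proof.
  intro E. destruct (mk_fst _ _ _ _ _ _ E) as [<- _]. apply mk_inj in E. subst. reflexivity.
Qed.

Lemma mk_unit_eq {V : SMCC} {A : VCat V} (x y : A) : x = y ->
  mk x x (vunit A x) = mk y y (vunit A y).
Proof. intros <-. reflexivity. Qed.

Definition Lift {V : SMCC} {X A B : VCat V} (M : VFunctor A B) (HM : fully_faithful M)
  (P : VFunctor X B) (Uo : X -> A) (e : forall x, P x = M (Uo x)) : VFunctor X A.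
Proof.
  refine {| fobj := Uo;
            fhom := fun x y => finv M HM (Uo x) (Uo y) ⊙ (vcast (e x) (e y) ⊙ fhom P x y) |}.
  - intros x y z. apply (iso_mono _ (HM (Uo x) (Uo z))).
    transitivity (vcomp B _ _ _ ⊙ tenm (Vm V) (vcast (e y) (e z) ⊙ fhom P y z)
                                         (vcast (e x) (e y) ⊙ fhom P x y)).
    + rewrite cmp_assoc. rewrite finv_cancel. rewrite <- cmp_assoc. rewrite (fcomp P).
      rewrite cmp_assoc, (vcast_comp _ _ _ _ _ _ (e x) (e y) (e z)), <- cmp_assoc, <- (tenm_cmp (Vl V)). reflexivity.
    + symmetry. rewrite cmp_assoc, (fcomp M), <- cmp_assoc, <- (tenm_cmp (Vl V)).
      rewrite !finv_cancel. reflexivity.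
  - intros x. apply (iso_mono _ (HM (Uo x) (Uo x))).
    rewrite cmp_assoc, finv_cancel, <- cmp_assoc, (funit P), vcast_unit, (funit M). reflexivity.
Defined.

Lemma lift_eq {V : SMCC} {X A B : VCat V} (M : VFunctor A B) (HM : fully_faithful M)
  (P : VFunctor X B) (Uo : X -> A) (e : forall x, P x = M (Uo x)) :
  vfcomp M (Lift M HM P Uo e) = P.
Proof.
  apply functor_ext.
  - intro x. symmetry. apply e.
  - intros x y. simpl. rewrite finv_cancel. apply mk_cast.
Qed.

Definition PbObj {V : SMCC} {B C D : VCat V} (K : VFunctor B D) (G : VFunctor C D) : Type :=
  {p : vobj B * vobj C | K (fst p) = G (snd p)}.
Definition pb1 {V : SMCC} {B C D : VCat V} {K : VFunctor B D} {G : VFunctor C D}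
  (p : PbObj K G) : B := fst (proj1_sig p).
Definition pb2 {V : SMCC} {B C D : VCat V} {K : VFunctor B D} {G : VFunctor C D}
  (p : PbObj K G) : C := snd (proj1_sig p).

Definition Pb {V : SMCC} {B C D : VCat V} (K : VFunctor B D) (G : VFunctor C D) : VCat V :=
  {| vobj := PbObj K G;
     vhom := fun p q => vhom B (pb1 p) (pb1 q);
     vcomp := fun p q r => vcomp B (pb1 p) (pb1 q) (pb1 r);
     vunit := fun p => vunit B (pb1 p);
     vassoc := fun p q r s => vassoc _ B (pb1 p) (pb1 q) (pb1 r) (pb1 s);
     vunit_l := fun p q => vunit_l _ B (pb1 p) (pb1 q);
     vunit_r := fun p q => vunit_r _ B (pb1 p) (pb1 q) |}.

Definition PB {V : SMCC} {B C D : VCat V} (K : VFunctor B D) (G : VFunctor C D)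
  : VFunctor (Pb K G) B.
Proof.
  refine (@Build_VFunctor V (Pb K G) B (fun p => pb1 p) (fun p q => idm _) _ _).
  - intros. simpl. rewrite (tenm_id _ _ (Vl V)), cmp_idl, cmp_idr. reflexivity.
  - intros. simpl. apply cmp_idl.
Defined.

Definition PC {V : SMCC} {B C D : VCat V} (K : VFunctor B D) (G : VFunctor C D)
  (HG : fully_faithful G) : VFunctor (Pb K G) C :=
  Lift G HG (vfcomp K (PB K G)) (fun p : PbObj K G => pb2 p) (fun p : PbObj K G => proj2_sig p).

Definition Cm {V : SMCC} {A B C D : VCat V} (F : VFunctor A B) (H : VFunctor A C)
  (K : VFunctor B D) (G : VFunctor C D) (E : vfcomp K F = vfcomp G H) : VFunctor A (Pb K G) :=
  @Build_VFunctor V A (Pb K G)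
    (fun x => exist (fun p : vobj B * vobj C => K (fst p) = G (snd p))
                        (F x, H x) (f_equal (fun M => fobj M x) E) : PbObj K G)
    (fun x y => fhom F x y) (fcomp F) (funit F).

Definition VId {V : SMCC} (A : VCat V) : VFunctor A A.
Proof.
  refine {| fobj := fun x => x; fhom := fun x y => idm _ |}.
  - intros. rewrite (tenm_id _ _ (Vl V)), cmp_idl, cmp_idr. reflexivity.
  - intros. apply cmp_idl.
Defined.

Lemma vfcomp_assoc {V : SMCC} {A B C D : VCat V} (F : VFunctor C D) (U : VFunctor B C)
  (W : VFunctor A B) : vfcomp F (vfcomp U W) = vfcomp (vfcomp F U) W.
Proof.
  apply functor_ext; [reflexivity|]. intros. simpl. rewrite cmp_assoc. reflexivity.
Qed.

Lemma vfcomp_id {V : SMCC} {A B : VCat V} (F : VFunctor A B) : vfcomp F (VId A) = F.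
Proof. apply functor_ext; [reflexivity|]. intros. simpl. rewrite cmp_idr. reflexivity. Qed.

Lemma obj_unique {V : SMCC} {A B C D : VCat V}
  (F : VFunctor A B) (H : VFunctor A C) (K : VFunctor B D) (G : VFunctor C D)
  (E : vfcomp K F = vfcomp G H) (HG : fully_faithful G) (HH : discrete_isofibration H)
  (HF : fully_faithful F) (a1 a2 : A) : F a1 = F a2 -> H a1 = H a2 -> a1 = a2.
Proof.
  intros eF eH.
  set (psi := vcast eq_refl eF ⊙ uid B (F a1) : uhom B (F a1) (F a2)).
  destruct (ff_full F HF a1 a2 psi) as [phi Hphi].
  assert (Hphiiso : is_uiso phi).
  { apply (ff_reflect_iso F HF). unfold ufmap. rewrite Hphi. apply uiso_cast, uid_iso. }
  assert (E1 : mapV F (mk a1 a2 phi) = mk (F a1) (F a1) (uid B (F a1))).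
  { rewrite mapV_mk, Hphi. apply mk_cast. }
  apply (f_equal (mapV K)) in E1.
  rewrite <- mapV_comp, E, mapV_comp, !mapV_mk in E1.
  unfold uid in E1. rewrite (funit K) in E1.
  assert (E3 : mk (H a1) (H a2) (fhom H a1 a2 ⊙ phi) = mk (H a2) (H a2) (uid C (H a2))).
  { apply (ff_mk_inj G HG); [exact eH | reflexivity |].
    rewrite E1. unfold uid. rewrite (funit G). apply mk_unit_eq.
    rewrite <- eH. exact (f_equal (fun M => fobj M a1) E). }
  apply mk_to_fix in E3.
  assert (E5 : existT (fun c0 : C => uhom C c0 (H a2)) (H a2) (ufmap H (uid A a2))
             = existT (fun c0 : C => uhom C c0 (H a2)) (H a2) (uid C (H a2))).
  { unfold ufmap, uid. rewrite (funit H). reflexivity. }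
  destruct (HH a2 (H a2) (uid C (H a2)) (uid_iso _ _)) as [c' [f' [_ [_ Hu]]]].
  pose proof (Hu a1 phi Hphiiso E3) as U1.
  pose proof (Hu a2 (uid A a2) (uid_iso _ _) E5) as U2.
  rewrite U1 in U2. exact (f_equal (@projT1 _ _) U2).
Qed.

Lemma obj_exists {V : SMCC} {A B C D : VCat V}
  (F : VFunctor A B) (H : VFunctor A C) (K : VFunctor B D) (G : VFunctor C D)
  (E : vfcomp K F = vfcomp G H) (HG : fully_faithful G) (HH : discrete_isofibration H)
  (HK : discrete_isofibration K) (b : B) (c : C) (ebc : K b = G c) (Hess : ess_image F b) :
  exists a, F a = b /\ H a = c.
Proof.
  destruct Hess as [a [f Hf]]. destruct (uiso_inv _ _ f Hf) as [f' Hf'].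
  set (kf := ufmap K f').
  assert (Hkf : is_uiso kf) by (apply ufmap_iso; exact Hf').
  pose proof (f_equal (fun M => fobj M a) E : K (F a) = G (H a)) as eKF.
  set (g0 := vcast ebc eKF ⊙ kf : uhom D (G c) (G (H a))).
  destruct (ff_full G HG c (H a) g0) as [h Hh].
  assert (Hhiso : is_uiso h).
  { apply (ff_reflect_iso G HG). unfold ufmap. rewrite Hh. apply uiso_cast, Hkf. }
  destruct (HH a c h Hhiso) as [a' [phi [Hphi [Hfix _]]]].
  pose proof (f_equal (@projT1 _ _) Hfix) as Hc. simpl in Hc.
  pose proof (fix_to_mk _ _ _ _ _ Hfix) as M1.
  unfold ufmap in M1. apply (f_equal (mapV G)) in M1. rewrite !mapV_mk in M1.
  rewrite Hh in M1. unfold g0 in M1. rewrite mk_cast in M1.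
  assert (M2 : mapV K (mapV F (mk a' a phi)) = mapV G (mapV H (mk a' a phi))).
  { rewrite <- !mapV_comp, E. reflexivity. }
  rewrite !mapV_mk in M2. rewrite M1 in M2.
  apply mk_to_fix in M2.
  destruct (HK (F a) (K b) kf Hkf) as [b0 [f0 [_ [_ Hu]]]].
  pose proof (Hu b f' Hf' eq_refl) as U1.
  pose proof (Hu (F a') (ufmap F phi) (ufmap_iso _ _ _ _ Hphi) M2) as U2.
  rewrite U1 in U2. apply (f_equal (@projT1 _ _)) in U2. simpl in U2.
  exists a'. split; [symmetry; exact U2 | exact Hc].
Qed.

Lemma iso_from {V : SMCC} {A B : VCat V} (F : VFunctor A B) (x y a b : A)
  (u : hom (vhom B (F x) (F y)) (vhom A a b)) :
  mk a b (u ⊙ fhom F x y) = mk x y (idm (vhom A x y)) ->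
  mk (F a) (F b) (fhom F a b ⊙ u) = mk (F x) (F y) (idm (vhom B (F x) (F y))) ->
  is_iso (fhom F x y).
Proof.
  intros H1 H2. destruct (mk_fst _ _ _ _ _ _ H1) as [-> ->].
  exists u. split; [apply (mk_inj _ _ _ _ H1) | apply (mk_inj _ _ _ _ H2)].
Qed.

Theorem lemma4p1 (V : SMCC) (A B C D : VCat V)
  (F : VFunctor A B) (H : VFunctor A C) (K : VFunctor B D) (G : VFunctor C D) :
  vfcomp K F = vfcomp G H ->
  fully_faithful G ->
  discrete_isofibration H ->
  discrete_isofibration K ->
  (is_pullback F H K G <->
   (fully_faithful F /\ (forall b : B, ess_image F b <-> ess_image G (K b)))).
Proof.
  intros E HG HH HK. split.
  - intro Hpb.
    assert (Hsq : vfcomp K (PB K G) = vfcomp G (PC K G HG)).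
    { symmetry. apply lift_eq. }
    destruct (Hpb (Pb K G) (PB K G) (PC K G HG) Hsq) as [U [[HU1 HU2] _]].
    assert (HUC : vfcomp U (Cm F H K G E) = VId A).
    { destruct (Hpb A F H E) as [U0 [_ Hu0]].
      transitivity U0; [symmetry|]; apply Hu0; split.
      - rewrite vfcomp_assoc, HU1. apply functor_ext; [reflexivity|].
        intros x y. simpl. rewrite cmp_idl. reflexivity.
      - rewrite vfcomp_assoc, HU2. apply functor_ext; [reflexivity|].
        intros x y. simpl.
        apply (ff_mk_inj G HG); [reflexivity|reflexivity|].
        rewrite cmp_assoc, finv_cancel, cmp_idr, <- cmp_assoc, mk_cast.
        exact (functor_eq_mk _ _ E x y).
      - apply vfcomp_id.
      - apply vfcomp_id. }
    split.
    + intros x y.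
      apply (iso_from F x y (U (Cm F H K G E x)) (U (Cm F H K G E y))
               (fhom U (Cm F H K G E x) (Cm F H K G E y))).
      * exact (functor_eq_mk _ _ HUC x y).
      * exact (functor_eq_mk _ _ HU1 (Cm F H K G E x) (Cm F H K G E y)).
    + intro b. split.
      * intros [a [f Hf]]. exists (H a).
        exists (vcast (f_equal (fun M => fobj M a) E) eq_refl ⊙ ufmap K f).
        exact (uiso_cast _ _ _ _ _ _ _ (ufmap_iso K _ _ f Hf)).
      * intros [c [g Hg]].
        destruct (HK b (G c) g Hg) as [b' [f' [Hf' [Hfix _]]]].
        pose proof (f_equal (@projT1 _ _) Hfix) as eb. simpl in eb.
        set (p := exist (fun p : vobj B * vobj C => K (fst p) = G (snd p)) (b', c) eb
                  : PbObj K G).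
        pose proof (f_equal (fun M : VFunctor (Pb K G) B => fobj M p) HU1 : F (U p) = b') as eU.
        exists (U p). exists (vcast (eq_sym eU) eq_refl ⊙ f').
        apply uiso_cast, Hf'.
  - intros [HF Hess] X P Q EPQ.
    assert (Hobj : forall x : X, {a : A | F a = P x /\ H a = Q x}).
    { intro x. apply constructive_indefinite_description.
      pose proof (f_equal (fun M => fobj M x) EPQ : K (P x) = G (Q x)) as ebc.
      apply (obj_exists F H K G E HG HH HK (P x) (Q x) ebc).
      apply Hess. exists (Q x). exists (vcast eq_refl (eq_sym ebc) ⊙ uid D (G (Q x))).
      apply uiso_cast, uid_iso. }
    set (Uo := fun x => proj1_sig (Hobj x)).
    assert (eF : forall x, P x = F (Uo x)).
    { intro x. unfold Uo. destruct (Hobj x) as [a [e1 e2]]. simpl. auto. }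
    assert (eH : forall x, H (Uo x) = Q x).
    { intro x. unfold Uo. destruct (Hobj x) as [a [e1 e2]]. simpl. auto. }
    set (L := Lift F HF P Uo eF).
    assert (HL1 : vfcomp F L = P) by apply lift_eq.
    exists L. split.
    + split; [exact HL1|].
      apply functor_ext; [exact eH|]. intros x y.
      apply (ff_mk_inj G HG); [apply eH | apply eH |].
      pose proof (mk_post _ _ _ _ _ _ (fhom L x y) (functor_eq_mk _ _ E (L x) (L y))) as E1.
      change (mk (G (H (L x))) (G (H (L y)))
                 (fhom G (H (L x)) (H (L y)) ⊙ (fhom H (L x) (L y) ⊙ fhom L x y))
              = mk (G (Q x)) (G (Q y)) (fhom G (Q x) (Q y) ⊙ fhom Q x y)).
      rewrite cmp_assoc.
      etransitivity; [symmetry; exact E1|].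
      change (mk (K (F (L x))) (K (F (L y)))
                 ((fhom K (F (L x)) (F (L y)) ⊙ fhom F (L x) (L y)) ⊙ fhom L x y)
              = mk (G (Q x)) (G (Q y)) (fhom G (Q x) (Q y) ⊙ fhom Q x y)).
      rewrite <- cmp_assoc.
      pose proof (f_equal (mapV K) (functor_eq_mk _ _ HL1 x y)) as E2.
      rewrite !mapV_mk in E2.
      etransitivity; [exact E2|]. exact (functor_eq_mk _ _ EPQ x y).
    + intros U' [HU1 HU2].
      assert (Hob : forall x, L x = U' x).
      { intro x. simpl. apply (obj_unique F H K G E HG HH HF).
        - rewrite <- eF. exact (eq_sym (f_equal (fun M => fobj M x) HU1)).
        - rewrite eH. exact (eq_sym (f_equal (fun M => fobj M x) HU2)). }
      apply functor_ext; [exact Hob|]. intros x y.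
      apply (ff_mk_inj F HF); [apply Hob | apply Hob |].
      etransitivity; [exact (functor_eq_mk _ _ HL1 x y)|]. symmetry. exact (functor_eq_mk _ _ HU1 x y).
Qed.
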